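(* For the $n$-dimensional ($n\ge3$) rigid body with a flat face rubber-rolling on a sphere (as in the context): (C1) If $\mathbb J=\mathrm{diag}(J_1,\dots,J_n)$ and $a=0$, then the reduced equations of motion on $T^*\mathbb R^{n-1}$ are Hamiltonian (with respect to the canonical structure and Hamiltonian $H$) in the original time $t$, and preserve the Liouville measure $\nu$. (C2) If $\mathbb J=\mathrm{diag}(J_1,\dots,J_1,J_n)$, then the reduced equations preserve the measure $$\mu=\exp\Big(\frac{(n-2)ma}{2R(J_1+J_n+ma^2)}\sum_{i=1}^{n-1}X_i^2\Big)\nu,$$ and become Hamiltonian, $ds_i/d\tau=\partial\tilde H/\partial\tilde p_i$, $d\tilde p_i/d\tau=-\partial\tilde H/\partial s_i$ with $\tilde H(s,\tilde p)=H(s,e^{-\phi}\tilde p)$, after the reparametrisation $$dt=e^{-\phi}d\tau,\qquad p_i=e^{-\phi}\tilde p_i,\qquad \phi=\frac{ma}{2R(J_1+J_n+ma^2)}\sum_{i=1}^{n-1}X_i^2 .$$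
   Context: Fix $n\ge3$, $R>0$, $a\in\mathbb R$, $m>0$, symmetric positive definite $n\times n$ matrix $\mathbb J$. Configuration space $Q=\mathbb R^{n-1}\times SO(n)\ni((X_1,\dots,X_{n-1}),g)$, $X=(X_1,\dots,X_{n-1},R+a)^T$, $\Omega=g^{-1}\dot g\in\mathfrak{so}(n)$, $E_1,\dots,E_n$ the standard basis of $\mathbb R^n$. Lagrangian $L=\frac12(\mathbb J\Omega+\Omega\mathbb J,\Omega)_\kappa+\frac m2\|\dot X+\Omega X\|^2$ with $(\xi,\eta)_\kappa=-\frac12\mathrm{tr}(\xi\eta)$, $\dot X_n=0$. Constraints: $\dot X=-R\Omega E_n$ and $\Omega_{\mu\nu}=0$ for $1\le\mu,\nu\le n-1$, defining a distribution $\mathcal D$. The action $h\cdot(X,g)=(X,hg)$ of $SO(n)$ makes this an $SO(n)$-Chaplygin system with shape space $S=\mathbb R^{n-1}$, coordinates $s_i=X_i$. Its reduced equations on $T^*S$ (canonical coordinates $(s,p)$) are $\dot s_i=\partial H/\partial p_i$, $\dot p_i=-\partial H/\partial s_i-\sum_{j,k}C_{ij}^kp_k\partial H/\partial p_j$, where $H=\frac12\sum K^{ij}p_ip_j$, $K_{ij}=\langle\mathrm{hor}_q\partial_{s_i},\mathrm{hor}_q\partial_{s_j}\rangle$ (horizontal lift into $\mathcal D_q$, metric given by $L$), $K^{ij}$ its inverse, and $C_{ij}^k=\sum_lK^{kl}\langle[\mathrm{hor}_q\partial_{s_i},\mathrm{hor}_q\partial_{s_j}],\mathrm{hor}_q\partial_{s_l}\rangle$.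 $\nu=ds_1\cdots ds_{n-1}dp_1\cdots dp_{n-1}$ is the Liouville volume. *)

(* Defs.v *)
From Stdlib Require Import Reals ClassicalEpsilon Arith.
Open Scope R_scope.

Definition vec := nat -> R.
Definition mat := nat -> nat -> R.

Fixpoint sumR (k : nat) (f : nat -> R) : R :=
  match k with O => 0 | S k' => sumR k' f + f k' end.

Definition delta (i j : nat) : R := if Nat.eq_dec i j then 1 else 0.
Definition unitv (i : nat) : vec := fun k => delta i k.

Definition mmul (n : nat) (A B : mat) : mat :=
  fun i j => sumR n (fun k => A i k * B k j).
Definition madd (A B : mat) : mat := fun i j => A i j + B i j.
Definition mtr (A : mat) : mat := fun i j => A j i.
Definition trace (n : nat) (A : mat) : R := sumR n (fun i => A i i).
Definition mvec (n : nat) (A : mat) (v : vec) : vec :=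
  fun i => sumR n (fun k => A i k * v k).

(** determinant of the upper-left k x k block (Laplace expansion, first row) *)
Definition minor0 (A : mat) (j : nat) : mat :=
  fun r c => A (S r) (if Nat.ltb c j then c else S c).
Fixpoint det (k : nat) (A : mat) : R :=
  match k with
  | O => 1
  | S k' => sumR k (fun j => (-1) ^ j * A 0%nat j * det k' (minor0 A j))
  end.

Definition in_SO (n : nat) (g : mat) : Prop :=
  (forall i j, (i < n)%nat -> (j < n)%nat -> mmul n (mtr g) g i j = delta i j)
  /\ det n g = 1.

Definition symmetric_pd (n : nat) (J : mat) : Prop :=
  (forall i j, (i < n)%nat -> (j < n)%nat -> J i j = J j i) /\
  (forall v : vec, (exists i, (i < n)%nat /\ v i <> 0) ->
     0 < sumR n (fun i => sumR n (fun j => v i * J i j * v j))).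

Definition Dlim (f : R -> R) : R :=
  epsilon (inhabits 0) (fun l => derivable_pt_lim f 0 l).

(** * The configuration space Q = R^{n-1} x SO(n), in ambient coordinates
    (s, g) with s : vec (entries 0..n-2 are X_1..X_{n-1}) and g : mat.
    Tangent vectors are pairs (Xdot, gdot) in ambient coordinates. *)
Definition tvec := (vec * mat)%type.
Definition tadd (v w : tvec) : tvec :=
  (fun k => fst v k + fst w k, fun i j => snd v i j + snd w i j).
Definition tsub (v w : tvec) : tvec :=
  (fun k => fst v k - fst w k, fun i j => snd v i j - snd w i j).

(** X = (X_1, ..., X_{n-1}, R + a)^T  (0-based: index n-1 is the last one) *)
Definition posX (n : nat) (Rad a : R) (s : vec) : vec :=
  fun k => if Nat.ltb k (n - 1) then s k else Rad + a.

Definition Xdot_full (n : nat) (v : tvec) : vec :=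
  fun k => if Nat.ltb k (n - 1) then fst v k else 0.

(** body angular velocity Omega = g^{-1} gdot = g^T gdot (g orthogonal) *)
Definition bodyOm (n : nat) (g : mat) (v : tvec) : mat := mmul n (mtr g) (snd v).

Definition kappa (n : nat) (A B : mat) : R := - (1/2) * trace n (mmul n A B).

Definition Lag (n : nat) (Rad a m : R) (J : mat) (s : vec) (g : mat) (v : tvec) : R :=
  let Om := bodyOm n g v in
  let X := posX n Rad a s in
  let Xd := Xdot_full n v in
  (1/2) * kappa n (madd (mmul n J Om) (mmul n Om J)) Om
  + (m / 2) * sumR n (fun k => (Xd k + mvec n Om X k) ^ 2).

(** The kinetic energy metric <.,.>_q, i.e. L(v) = 1/2 <v,v>_q (polarization) *)
Definition metric (n : nat) (Rad a m : R) (J : mat) (s : vec) (g : mat) (v w : tvec) : R :=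
  Lag n Rad a m J s g (tadd v w) - Lag n Rad a m J s g v - Lag n Rad a m J s g w.

Definition in_D (n : nat) (Rad : R) (s : vec) (g : mat) (v : tvec) : Prop :=
  exists Om : mat,
    (forall i j, (i < n)%nat -> (j < n)%nat -> Om j i = - Om i j) /\
    (forall i j, (i < n - 1)%nat -> (j < n - 1)%nat -> Om i j = 0) /\
    (forall i j, (i < n)%nat -> (j < n)%nat -> snd v i j = mmul n g Om i j) /\
    (forall i, (i < n - 1)%nat -> fst v i = - Rad * mvec n Om (unitv (n - 1)) i).

Definition vfield := vec -> mat -> tvec.

Definition hor_spec (n : nat) (Rad : R) (hor : nat -> vfield) : Prop :=
  forall i, (i < n - 1)%nat -> forall (s : vec) (g : mat),
    in_D n Rad s g (hor i s g) /\
    (forall k, (k < n - 1)%nat -> fst (hor i s g) k = delta i k).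

Definition ddir (W : vfield) (s : vec) (g : mat) (v : tvec) : tvec :=
  (fun k => Dlim (fun t => fst (W (fun r => s r + t * fst v r)
                                  (fun r c => g r c + t * snd v r c)) k),
   fun i j => Dlim (fun t => snd (W (fun r => s r + t * fst v r)
                                  (fun r c => g r c + t * snd v r c)) i j)).

Definition bracket (V W : vfield) : vfield :=
  fun s g => tsub (ddir W s g (V s g)) (ddir V s g (W s g)).

(** * Data of the reduced (Chaplygin) system on T*S, S = R^{n-1}, computed at
    the points q = (s, g0) of the fibre through a fixed g0 in SO(n). *)
Definition Kmat (n : nat) (Rad a m : R) (J : mat) (hor : nat -> vfield) (g0 : mat)
  (s : vec) : mat :=
  fun i j => metric n Rad a m J s g0 (hor i s g0) (hor j s g0).

Definition is_inverse (k : nat) (A B : mat) : Prop :=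
  forall i j, (i < k)%nat -> (j < k)%nat -> sumR k (fun l => A i l * B l j) = delta i j.

Definition Ccoef (n : nat) (Rad a m : R) (J : mat) (hor : nat -> vfield) (g0 : mat)
  (Kinv : vec -> mat) (i j k : nat) (s : vec) : R :=
  sumR (n - 1) (fun l => Kinv s k l *
     metric n Rad a m J s g0 (bracket (hor i) (hor j) s g0) (hor l s g0)).

Definition Hred (n : nat) (Kinv : vec -> mat) (s p : vec) : R :=
  (1/2) * sumR (n - 1) (fun i => sumR (n - 1) (fun j => Kinv s i j * p i * p j)).

Definition upd (x : vec) (i : nat) (t : R) : vec :=
  fun r => if Nat.eq_dec r i then x r + t else x r.

Definition pd_s (F : vec -> vec -> R) (s p : vec) (i : nat) : R :=
  Dlim (fun t => F (upd s i t) p).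
Definition pd_p (F : vec -> vec -> R) (s p : vec) (i : nat) : R :=
  Dlim (fun t => F s (upd p i t)).

(** the reduced equations: sdot_i = Ys i, pdot_i = Yp i *)
Definition Ys (n : nat) (Kinv : vec -> mat) (i : nat) (s p : vec) : R :=
  pd_p (Hred n Kinv) s p i.
Definition Yp (n : nat) (Cc : nat -> nat -> nat -> vec -> R) (Kinv : vec -> mat)
  (i : nat) (s p : vec) : R :=
  - pd_s (Hred n Kinv) s p i
  - sumR (n - 1) (fun j => sumR (n - 1) (fun k =>
        Cc i j k s * p k * pd_p (Hred n Kinv) s p j)).

(** divergence of the vector field rho * Y (rho a density on S);
    the measure rho * nu is invariant iff this vanishes identically. *)
Definition div_weighted (n : nat) (rho : vec -> R)
  (Fs Fp : nat -> vec -> vec -> R) (s p : vec) : R :=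
  sumR (n - 1) (fun i =>
    pd_s (fun s' p' => rho s' * Fs i s' p') s p i
    + pd_p (fun s' p' => rho s' * Fp i s' p') s p i).

Definition lie_deriv (n : nat) (Fs Fp : nat -> vec -> vec -> R)
  (F : vec -> vec -> R) (s p : vec) : R :=
  sumR (n - 1) (fun j => pd_s F s p j * Fs j s p + pd_p F s p j * Fp j s p).

Definition sumsq (n : nat) (s : vec) : R := sumR (n - 1) (fun i => s i ^ 2).

(* Main.v *)
Require Import Defs.
From Stdlib Require Import Reals Arith Lia Lra ClassicalEpsilon FunctionalExtensionality.
Open Scope R_scope.

Lemma Dlim_eq f l : derivable_pt_lim f 0 l -> Dlim f = l.
Proof. intro H. unfold Dlim. apply uniqueness_limite with f 0; auto.
  apply epsilon_spec. exists l; exact H. Qed.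

Lemma sumR_ext k f g : (forall c, (c < k)%nat -> f c = g c) -> sumR k f = sumR k g.
Proof. induction k; simpl; intros H; auto. rewrite IHk by (intros; apply H; lia).
  rewrite H by lia. auto. Qed.
Lemma sumR_plus k f g : sumR k (fun c => f c + g c) = sumR k f + sumR k g.
Proof. induction k; simpl; [ring|rewrite IHk; ring]. Qed.
Lemma sumR_minus k f g : sumR k (fun c => f c - g c) = sumR k f - sumR k g.
Proof. induction k; simpl; [ring|rewrite IHk; ring]. Qed.
Lemma sumR_scal k c f : sumR k (fun i => c * f i) = c * sumR k f.
Proof. induction k; simpl; [ring|rewrite IHk; ring]. Qed.
Lemma sumR_opp k f : sumR k (fun i => - f i) = - sumR k f.
Proof. induction k; simpl; [ring|rewrite IHk; ring]. Qed.
Lemma sumR_zero k f : (forall c, (c<k)%nat -> f c = 0) -> sumR k f = 0.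
Proof. induction k; simpl; intros H; auto. rewrite IHk by (intros; apply H; lia).
  rewrite H by lia. ring. Qed.
Lemma sumR_pick k f x : (x<k)%nat -> (forall c, (c<k)%nat -> c<>x -> f c = 0) -> sumR k f = f x.
Proof. induction k; simpl; intros Hx H; [lia|].
  destruct (Nat.eq_dec x k).
  - subst. rewrite sumR_zero. ring. intros; apply H; lia.
  - rewrite IHk by (try lia; intros; apply H; lia). rewrite (H k) by lia. ring. Qed.
Lemma delta_eq i : delta i i = 1.
Proof. unfold delta; destruct Nat.eq_dec; congruence. Qed.
Lemma delta_neq i j : i <> j -> delta i j = 0.
Proof. unfold delta; destruct Nat.eq_dec; congruence. Qed.
Lemma delta_sym i j : delta i j = delta j i.
Proof. unfold delta; do 2 destruct Nat.eq_dec; congruence. Qed.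
Lemma sumR_delta k x f : (x<k)%nat -> sumR k (fun c => delta x c * f c) = f x.
Proof. intros. rewrite (sumR_pick _ _ x); auto. rewrite delta_eq; ring.
  intros; rewrite delta_neq; auto; ring. Qed.
Lemma sumR_delta' k x f : (x<k)%nat -> sumR k (fun c => delta c x * f c) = f x.
Proof. intros. rewrite (sumR_pick _ _ x); auto. rewrite delta_eq; ring.
  intros; rewrite delta_neq; auto; ring. Qed.
Lemma sumR_swap k l F : sumR k (fun a => sumR l (fun b => F a b)) = sumR l (fun b => sumR k (fun a => F a b)).
Proof. induction k; simpl.
  - rewrite sumR_zero; auto.
  - rewrite IHk. rewrite <- sumR_plus. auto. Qed.
Lemma sumR_last k f : (1<=k)%nat -> sumR k f = sumR (k-1) f + f (k-1)%nat.
Proof. intros. destruct k; [lia|]. simpl. rewrite Nat.sub_0_r. auto. Qed.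

Lemma dpl_ext f g x l : (forall t, f t = g t) -> derivable_pt_lim f x l -> derivable_pt_lim g x l.
Proof. intros H; replace g with f; auto. apply functional_extensionality; auto. Qed.
Lemma dpl_eql f x l l' : derivable_pt_lim f x l -> l = l' -> derivable_pt_lim f x l'.
Proof. intros; subst; auto. Qed.
Lemma dpl_const c x : derivable_pt_lim (fun _ => c) x 0.
Proof. exact (derivable_pt_lim_const c x). Qed.
Lemma dpl_id x : derivable_pt_lim (fun t => t) x 1.
Proof. exact (derivable_pt_lim_id x). Qed.
Lemma dpl_plus f g x l1 l2 : derivable_pt_lim f x l1 -> derivable_pt_lim g x l2 ->
  derivable_pt_lim (fun t => f t + g t) x (l1+l2).
Proof. intros; exact (derivable_pt_lim_plus f g x l1 l2 H H0). Qed.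
Lemma dpl_mult f g x l1 l2 : derivable_pt_lim f x l1 -> derivable_pt_lim g x l2 ->
  derivable_pt_lim (fun t => f t * g t) x (l1 * g x + f x * l2).
Proof. intros; exact (derivable_pt_lim_mult f g x l1 l2 H H0). Qed.
Lemma dpl_scal c f x l : derivable_pt_lim f x l -> derivable_pt_lim (fun t => c * f t) x (c * l).
Proof. intros. eapply dpl_eql. apply (dpl_mult (fun _ => c) f). apply dpl_const. eauto. simpl; ring. Qed.
Lemma dpl_opp f x l : derivable_pt_lim f x l -> derivable_pt_lim (fun t => - f t) x (- l).
Proof. intros. apply dpl_eql with (-1 * l); [|ring].
  eapply dpl_ext. 2: apply (dpl_scal (-1)); eauto. intros; simpl; ring. Qed.
Lemma dpl_minus f g x l1 l2 : derivable_pt_lim f x l1 -> derivable_pt_lim g x l2 ->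
  derivable_pt_lim (fun t => f t - g t) x (l1-l2).
Proof. intros. apply dpl_plus; auto. apply dpl_opp; auto. Qed.
Lemma dpl_inv f x l : derivable_pt_lim f x l -> f x <> 0 ->
  derivable_pt_lim (fun t => / f t) x (- l / (f x)^2).
Proof. intros. eapply dpl_ext. 2: eapply dpl_eql.
  2: apply (derivable_pt_lim_div (fun _ => 1) f x 0 l); auto; apply dpl_const.
  intros; unfold div_fct; simpl. unfold Rdiv; ring.
  unfold Rsqr; simpl; field; auto. Qed.
Lemma dpl_exp f x l : derivable_pt_lim f x l -> derivable_pt_lim (fun t => exp (f t)) x (exp (f x) * l).
Proof. intros. eapply dpl_eql. apply (derivable_pt_lim_comp f exp x l (exp (f x))); auto.
  apply derivable_pt_lim_exp. ring. Qed.
Lemma dpl_sum k F F' x : (forall c, (c<k)%nat -> derivable_pt_lim (F c) x (F' c)) ->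
  derivable_pt_lim (fun t => sumR k (fun c => F c t)) x (sumR k F').
Proof. induction k; simpl; intros H. apply dpl_const.
  apply dpl_plus. apply IHk; intros; apply H; lia. apply H; lia. Qed.
Lemma dpl_upd p i j : derivable_pt_lim (fun t => upd p i t j) 0 (delta j i).
Proof. unfold upd, delta. destruct Nat.eq_dec.
  - eapply dpl_eql. apply dpl_plus. apply dpl_const. apply dpl_id. ring.
  - apply dpl_const. Qed.
Lemma upd0 p i j : upd p i 0 j = p j.
Proof. unfold upd; destruct Nat.eq_dec; ring. Qed.

Definition Qf (N:nat) (K : mat) (p q : vec) := sumR N (fun a => sumR N (fun b => K a b * p a * q b)).

Lemma dpl_Q N (Kt : R -> mat) (pt : R -> vec) (dK : mat) (dp : vec) :
 (forall a b, (a<N)%nat -> (b<N)%nat -> derivable_pt_lim (fun t => Kt t a b) 0 (dK a b)) ->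
 (forall a, (a<N)%nat -> derivable_pt_lim (fun t => pt t a) 0 (dp a)) ->
 derivable_pt_lim (fun t => Qf N (Kt t) (pt t) (pt t)) 0
   (sumR N (fun a => sumR N (fun b => dK a b * pt 0 a * pt 0 b + Kt 0 a b * dp a * pt 0 b + Kt 0 a b * pt 0 a * dp b))).
Proof. intros HK Hp. unfold Qf.
  apply (dpl_sum N (fun a t => sumR N (fun b => Kt t a b * pt t a * pt t b))). intros a Ha.
  apply (dpl_sum N (fun b t => Kt t a b * pt t a * pt t b)). intros b Hb.
  eapply dpl_eql. apply (dpl_mult (fun t => Kt t a b * pt t a) (fun t => pt t b)).
  apply (dpl_mult (fun t => Kt t a b) (fun t => pt t a)). all: auto. ring. Qed.

Definition omh (n : nat) (Rad : R) (i : nat) : mat :=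
  fun a b => (delta (n-1) a * delta i b - delta i a * delta (n-1) b) / Rad.
Definition omb (Rad : R) (i j : nat) : mat :=
  fun a b => (delta j a * delta i b - delta i a * delta j b) / Rad^2.

Lemma sumR_delta2 k x y F G : (x<k)%nat -> (y<k)%nat ->
  sumR k (fun c => delta x c * F c + delta y c * G c) = F x + G y.
Proof. intros. rewrite sumR_plus, !sumR_delta; auto. Qed.

Ltac dcase := unfold delta in *; repeat (destruct Nat.eq_dec); subst; try (exfalso; lia).

Lemma in_D_hor n Rad s g v i : (1 <= n)%nat -> 0 < Rad -> (i < n-1)%nat ->
  in_D n Rad s g v -> (forall k, (k < n-1)%nat -> fst v k = delta i k) ->
  forall r c, (r < n)%nat -> (c < n)%nat -> snd v r c = mmul n g (omh n Rad i) r c.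
Proof.
  intros Hn HR Hi [Om [Hsk [Hbl [Hsnd Hfst]]]] Hf r c Hr Hc.
  rewrite Hsnd by auto. unfold mmul. apply sumR_ext. intros k Hk. f_equal.
  assert (HN : forall a, (a < n-1)%nat -> Om a (n-1)%nat = - delta i a / Rad).
  { intros a0 Ha. specialize (Hfst a0 Ha). rewrite Hf in Hfst by auto.
    unfold mvec, unitv in Hfst.
    rewrite (sumR_ext _ _ (fun k => delta (n-1) k * Om a0 k)) in Hfst
      by (intros; ring).
    rewrite sumR_delta in Hfst by lia. rewrite Hfst. field. lra. }
  assert (Hk' : (k < n-1)%nat \/ k = (n-1)%nat) by lia.
  assert (Hc' : (c < n-1)%nat \/ c = (n-1)%nat) by lia.
  destruct Hk' as [Hk'|Hk']; destruct Hc' as [Hc'|Hc']; subst.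
  - rewrite Hbl by auto. unfold omh. dcase; field; lra.
  - rewrite HN by auto. unfold omh. dcase; field; lra.
  - rewrite (Hsk c (n-1)%nat), (HN c) by lia. unfold omh. dcase; field; lra.
  - assert (Om (n-1)%nat (n-1)%nat = 0). { pose proof (Hsk (n-1)%nat (n-1)%nat ltac:(lia) ltac:(lia)). lra. }
    rewrite H. unfold omh. dcase; field; lra.
Qed.

Lemma bodyOm_eq n g v W : in_SO n g ->
  (forall r c, (r < n)%nat -> (c < n)%nat -> snd v r c = mmul n g W r c) ->
  forall a b, (a < n)%nat -> (b < n)%nat -> bodyOm n g v a b = W a b.
Proof.
  intros [Ho _] Hv a b Ha Hb. unfold bodyOm, mmul, mtr.
  rewrite (sumR_ext _ _ (fun k => sumR n (fun l => g k a * g k l * W l b))).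
  2:{ intros k Hk. rewrite Hv by auto. unfold mmul. rewrite <- sumR_scal.
      apply sumR_ext; intros; ring. }
  rewrite sumR_swap.
  rewrite (sumR_ext _ _ (fun l => delta a l * W l b)). apply (sumR_delta n a (fun l => W l b)); auto.
  intros l Hl. rewrite <- (Ho a l) by auto. unfold mmul, mtr.
  rewrite (sumR_ext _ _ (fun k => W l b * (g k a * g k l))) by (intros; ring).
  rewrite sumR_scal. ring.
Qed.

Definition Jdiag n (J : mat) := forall i j, (i<n)%nat -> (j<n)%nat -> i <> j -> J i j = 0.

Definition MF (n:nat) (Rad a m : R) (J : mat) (s : vec) (Ov : mat) (xv : vec) (Ow : mat) (xw : vec) : R :=
  -(1/4) * sumR n (fun i => sumR n (fun k => (J i i + J k k) * (Ov i k * Ow k i + Ow i k * Ov k i)))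
  + m * sumR n (fun k => (xv k + sumR n (fun l => Ov k l * posX n Rad a s l)) *
                         (xw k + sumR n (fun l => Ow k l * posX n Rad a s l))).

Lemma Lag_eq n Rad a m J s g v : Jdiag n J ->
  Lag n Rad a m J s g v =
  1/2 * (-(1/2) * sumR n (fun i => sumR n (fun k => (J i i + J k k) * bodyOm n g v i k * bodyOm n g v k i)))
  + m/2 * sumR n (fun k => (Xdot_full n v k + sumR n (fun l => bodyOm n g v k l * posX n Rad a s l))^2).
Proof.
  intros HJ. unfold Lag; cbv zeta.
  assert (K : kappa n (madd (mmul n J (bodyOm n g v)) (mmul n (bodyOm n g v) J)) (bodyOm n g v)
    = -(1/2) * sumR n (fun i => sumR n (fun k => (J i i + J k k) * bodyOm n g v i k * bodyOm n g v k i))).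
  2:{ rewrite K. reflexivity. }
  unfold kappa, trace. f_equal.
  apply sumR_ext; intros i Hi. unfold mmul at 1. apply sumR_ext; intros k Hk.
  unfold madd, mmul at 1 2. f_equal.
  rewrite (sumR_pick n (fun k0 => J i k0 * _) i), (sumR_pick n (fun k0 => _ * J k0 k) k); auto.
  - simpl. unfold mmul. ring.
  - intros c Hc Hne. rewrite HJ; auto; ring.
  - intros c Hc Hne. rewrite HJ; auto; ring.
Qed.

Lemma bodyOm_add n g v w : bodyOm n g (tadd v w) = fun a b => bodyOm n g v a b + bodyOm n g w a b.
Proof. apply functional_extensionality; intro a0; apply functional_extensionality; intro b.
  unfold bodyOm, mmul, tadd; simpl. rewrite <- sumR_plus. apply sumR_ext; intros; ring. Qed.

Lemma Xdot_add n v w : Xdot_full n (tadd v w) = fun k => Xdot_full n v k + Xdot_full n w k.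
Proof. apply functional_extensionality; intro k. unfold Xdot_full, tadd; simpl.
  destruct (Nat.ltb k (n-1)); ring. Qed.

Lemma metric_eq n Rad a m J s g v w : Jdiag n J ->
  metric n Rad a m J s g v w = MF n Rad a m J s (bodyOm n g v) (Xdot_full n v) (bodyOm n g w) (Xdot_full n w).
Proof.
  intros HJ. unfold metric. rewrite !Lag_eq by auto. rewrite bodyOm_add, Xdot_add.
  set (U := bodyOm n g v). set (W := bodyOm n g w). set (xu := Xdot_full n v). set (xw := Xdot_full n w).
  set (X := posX n Rad a s).
  assert (E1 : sumR n (fun i => sumR n (fun k => (J i i + J k k) * (U i k + W i k) * (U k i + W k i))) =
     sumR n (fun i => sumR n (fun k => (J i i + J k k) * U i k * U k i))
   + sumR n (fun i => sumR n (fun k => (J i i + J k k) * W i k * W k i))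
   + sumR n (fun i => sumR n (fun k => (J i i + J k k) * (U i k * W k i + W i k * U k i)))).
  { rewrite <- !sumR_plus. apply sumR_ext; intros. rewrite <- !sumR_plus. apply sumR_ext; intros. ring. }
  assert (E2 : sumR n (fun k => (xu k + xw k + sumR n (fun l => (U k l + W k l) * X l))^2) =
     sumR n (fun k => (xu k + sumR n (fun l => U k l * X l))^2)
   + sumR n (fun k => (xw k + sumR n (fun l => W k l * X l))^2)
   + 2 * sumR n (fun k => (xu k + sumR n (fun l => U k l * X l)) * (xw k + sumR n (fun l => W k l * X l)))).
  { rewrite <- !sumR_scal, <- !sumR_plus. apply sumR_ext; intros x Hx.
    rewrite (sumR_ext n (fun l => (U x l + W x l) * X l) (fun l => U x l * X l + W x l * X l)) by (intros; ring).
    rewrite sumR_plus. ring. }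
  rewrite E1, E2. unfold MF. fold X. field.
Qed.


Lemma MF_ext n Rad a m J s Ov xv Ow xw Ov' xv' Ow' xw' :
  (forall a b, (a<n)%nat -> (b<n)%nat -> Ov a b = Ov' a b) ->
  (forall a b, (a<n)%nat -> (b<n)%nat -> Ow a b = Ow' a b) ->
  (forall k, (k<n)%nat -> xv k = xv' k) -> (forall k, (k<n)%nat -> xw k = xw' k) ->
  MF n Rad a m J s Ov xv Ow xw = MF n Rad a m J s Ov' xv' Ow' xw'.
Proof. intros H1 H2 H3 H4. unfold MF. apply (f_equal2 Rplus); apply (f_equal2 Rmult); auto.
  - apply sumR_ext; intros. apply sumR_ext; intros. rewrite !H1, !H2; auto.
  - apply sumR_ext; intros. rewrite H3, H4 by auto.
    rewrite (sumR_ext n (fun l => Ov c l * _) (fun l => Ov' c l * posX n Rad a s l)) by (intros; rewrite H1; auto).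
    rewrite (sumR_ext n (fun l => Ow c l * _) (fun l => Ow' c l * posX n Rad a s l)) by (intros; rewrite H2; auto).
    auto.
Qed.

Lemma posX_lt n Rad a s i : (i < n-1)%nat -> posX n Rad a s i = s i.
Proof. intros; unfold posX. destruct (Nat.ltb_spec i (n-1)); auto; lia. Qed.
Lemma posX_N n Rad a s : posX n Rad a s (n-1)%nat = Rad + a.
Proof. unfold posX. destruct (Nat.ltb_spec (n-1) (n-1)); auto; lia. Qed.

Lemma omhX n Rad a s i k : (2 <= n)%nat -> (i < n-1)%nat -> Rad <> 0 ->
  sumR n (fun l => omh n Rad i k l * posX n Rad a s l) = (delta (n-1) k * s i - delta i k * (Rad + a)) / Rad.
Proof. intros Hn Hi HR.
  rewrite (sumR_ext _ _ (fun l => delta i l * (delta (n-1) k * posX n Rad a s l / Rad)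
                                 + delta (n-1) l * (- delta i k * posX n Rad a s l / Rad))).
  2:{ intros; unfold omh; field; auto. }
  rewrite sumR_delta2 by lia. rewrite posX_lt, posX_N by auto. field; auto. Qed.

Lemma ombX n Rad a s i j k : (2 <= n)%nat -> (i < n-1)%nat -> (j < n-1)%nat -> Rad <> 0 ->
  sumR n (fun l => omb Rad i j k l * posX n Rad a s l) = (delta j k * s i - delta i k * s j) / Rad^2.
Proof. intros Hn Hi Hj HR.
  rewrite (sumR_ext _ _ (fun l => delta i l * (delta j k * posX n Rad a s l / Rad^2)
                                 + delta j l * (- delta i k * posX n Rad a s l / Rad^2))).
  2:{ intros; unfold omb; field; auto. }
  rewrite sumR_delta2 by lia. rewrite !posX_lt by auto. field; auto. Qed.

Lemma MF_hh n Rad a m J s i j : (2 <= n)%nat -> (i < n-1)%nat -> (j < n-1)%nat -> Rad <> 0 ->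
  MF n Rad a m J s (omh n Rad i) (unitv i) (omh n Rad j) (unitv j)
  = (delta i j * (J i i + J (n-1)%nat (n-1)%nat + m * a^2) + m * s i * s j) / Rad^2.
Proof. intros Hn Hi Hj HR. unfold MF.
  rewrite (sumR_ext n (fun k => (unitv i k + _) * (unitv j k + _))
     (fun k => delta i k * (delta j k * a^2 / Rad^2) + delta (n-1) k * (s i * s j / Rad^2))).
  2:{ intros k Hk. rewrite !omhX by auto. unfold unitv. dcase; field; auto. }
  rewrite sumR_delta2 by lia.
  rewrite (sumR_last n) by lia.
  rewrite (sumR_ext (n-1) _ (fun x => delta i x * ((J x x + J (n-1)%nat (n-1)%nat) * (-2 * delta j x / Rad^2)))).
  2:{ intros x Hx. rewrite (sumR_pick n _ (n-1)) by (try lia; intros; unfold omh; dcase; field; auto).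
      unfold omh. dcase; field; auto. }
  rewrite sumR_delta by lia.
  rewrite (sumR_pick n _ i) by (try lia; intros; unfold omh; dcase; field; auto).
  unfold omh. dcase; field; auto.
Qed.

Lemma omh_blk n Rad l x k : (x < n-1)%nat -> (k < n-1)%nat -> omh n Rad l x k = 0.
Proof. intros; unfold omh. rewrite (delta_neq (n-1) x), (delta_neq (n-1) k) by lia.
  unfold Rdiv; ring. Qed.
Lemma omb_Nl Rad i j n k : (i < n-1)%nat -> (j < n-1)%nat -> omb Rad i j (n-1)%nat k = 0.
Proof. intros; unfold omb. rewrite (delta_neq i (n-1)), (delta_neq j (n-1)) by lia.
  unfold Rdiv; ring. Qed.
Lemma omb_Nr Rad i j n k : (i < n-1)%nat -> (j < n-1)%nat -> omb Rad i j k (n-1)%nat = 0.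
Proof. intros; unfold omb. rewrite (delta_neq i (n-1)), (delta_neq j (n-1)) by lia.
  unfold Rdiv; ring. Qed.

Lemma MF_bh n Rad a m J s i j l : (2 <= n)%nat -> (i < n-1)%nat -> (j < n-1)%nat -> (l < n-1)%nat ->
  Rad <> 0 ->
  MF n Rad a m J s (omb Rad i j) (fun _ => 0) (omh n Rad l) (unitv l)
  = - (m * a / Rad^3) * (delta j l * s i - delta i l * s j).
Proof. intros Hn Hi Hj Hl HR. unfold MF.
  rewrite (sumR_zero n (fun x => sumR n _)).
  2:{ intros x Hx. apply sumR_zero. intros k Hk.
      assert (x < n-1 \/ x = n-1)%nat as [Hx'|Hx'] by lia;
      assert (k < n-1 \/ k = n-1)%nat as [Hk'|Hk'] by lia; subst;
      rewrite ?omh_blk, ?omb_Nl, ?omb_Nr by auto; ring. }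
  rewrite (sumR_ext n (fun k => (0 + _) * (unitv l k + _))
     (fun k => delta l k * (-(a/Rad^3) * (delta j k * s i - delta i k * s j)))).
  2:{ intros k Hk. rewrite omhX, ombX by auto. unfold unitv. dcase; field; auto. }
  rewrite sumR_delta by lia. field; auto.
Qed.


Lemma dpl_lin A B x : derivable_pt_lim (fun t => A + t * B) x B.
Proof. eapply dpl_eql. apply dpl_plus. apply dpl_const.
  apply (dpl_mult (fun t => t) (fun _ => B)). apply dpl_id. apply dpl_const. ring. Qed.

Lemma comm_omh n Rad i j a b : (2 <= n)%nat -> (i < n-1)%nat -> (j < n-1)%nat -> Rad <> 0 ->
  (a < n)%nat -> (b < n)%nat ->
  sumR n (fun k => omh n Rad i a k * omh n Rad j k b) - sumR n (fun k => omh n Rad j a k * omh n Rad i k b)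
  = omb Rad i j a b.
Proof. intros Hn Hi Hj HR Ha Hb.
  rewrite (sumR_ext n (fun k => omh n Rad i a k * _)
    (fun k => delta i k * (delta (n-1) a * omh n Rad j k b / Rad) + delta (n-1) k * (- delta i a * omh n Rad j k b / Rad)))
    by (intros; unfold omh at 1; field; auto).
  rewrite (sumR_ext n (fun k => omh n Rad j a k * _)
    (fun k => delta j k * (delta (n-1) a * omh n Rad i k b / Rad) + delta (n-1) k * (- delta j a * omh n Rad i k b / Rad)))
    by (intros; unfold omh at 1; field; auto).
  rewrite !sumR_delta2 by lia. unfold omh, omb. dcase; field; auto.
Qed.

Section Geo.
Variables (n : nat) (Rad a m : R) (J : mat) (hor : nat -> vfield) (g0 : mat).
Hypotheses (Hn : (2 <= n)%nat) (HR : 0 < Rad) (HJ : Jdiag n J) (Hhor : hor_spec n Rad hor) (HSO : in_SO n g0).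

Lemma hor_snd i s g r c : (i < n-1)%nat -> (r < n)%nat -> (c < n)%nat ->
  snd (hor i s g) r c = mmul n g (omh n Rad i) r c.
Proof. intros. destruct (Hhor i H s g) as [HD Hf]. eapply in_D_hor; eauto. lia. Qed.

Lemma hor_body i s r c : (i < n-1)%nat -> (r < n)%nat -> (c < n)%nat ->
  bodyOm n g0 (hor i s g0) r c = omh n Rad i r c.
Proof. intros. apply bodyOm_eq; auto. intros; apply hor_snd; auto. Qed.

Lemma hor_xdot i s k : (i < n-1)%nat -> (k < n)%nat -> Xdot_full n (hor i s g0) k = unitv i k.
Proof. intros. unfold Xdot_full, unitv. destruct (Nat.ltb_spec k (n-1)).
  - apply (Hhor i H s g0); auto.
  - rewrite delta_neq; auto; lia. Qed.

Lemma Kmat_eq s i j : (i < n-1)%nat -> (j < n-1)%nat ->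
  Kmat n Rad a m J hor g0 s i j = (delta i j * (J i i + J (n-1)%nat (n-1)%nat + m * a^2) + m * s i * s j) / Rad^2.
Proof. intros. unfold Kmat. rewrite metric_eq by auto.
  rewrite (MF_ext _ _ _ _ _ _ _ _ _ _ (omh n Rad i) (unitv i) (omh n Rad j) (unitv j)).
  - apply MF_hh; auto; lra.
  - intros; apply hor_body; auto.
  - intros; apply hor_body; auto.
  - intros; apply hor_xdot; auto.
  - intros; apply hor_xdot; auto.
Qed.

Lemma ddir_snd i j s r c : (i < n-1)%nat -> (j < n-1)%nat -> (r < n)%nat -> (c < n)%nat ->
  snd (ddir (hor j) s g0 (hor i s g0)) r c =
  sumR n (fun k => sumR n (fun l => g0 r l * omh n Rad i l k) * omh n Rad j k c).
Proof. intros. unfold ddir; simpl. apply Dlim_eq.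
  eapply dpl_ext. intros t. symmetry. apply hor_snd; auto.
  unfold mmul. apply (dpl_sum n (fun k t => (g0 r k + t * snd (hor i s g0) r k) * omh n Rad j k c)).
  intros k Hk. eapply dpl_eql. apply (dpl_mult (fun t => g0 r k + t * snd (hor i s g0) r k) (fun _ => omh n Rad j k c)).
  apply dpl_lin. apply dpl_const. rewrite hor_snd by auto. unfold mmul. ring.
Qed.

Lemma ddir_fst i j s k : (i < n-1)%nat -> (j < n-1)%nat -> (k < n-1)%nat ->
  fst (ddir (hor j) s g0 (hor i s g0)) k = 0.
Proof. intros. unfold ddir; simpl. apply Dlim_eq.
  eapply dpl_ext. intros t. symmetry. apply (Hhor j H0); auto. apply dpl_const. Qed.

Lemma assoc_sum (g : mat) (X : mat) (Y : vec) r :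
  sumR n (fun k => sumR n (fun l => g r l * X l k) * Y k) = sumR n (fun l => g r l * sumR n (fun k => X l k * Y k)).
Proof. rewrite (sumR_ext n _ (fun k => sumR n (fun l => g r l * X l k * Y k))).
  2:{ intros. rewrite (Rmult_comm _ (Y c)), <- sumR_scal. apply sumR_ext; intros; ring. }
  rewrite sumR_swap. apply sumR_ext; intros. rewrite <- sumR_scal. apply sumR_ext; intros; ring. Qed.

Lemma bracket_body i j s r c : (i < n-1)%nat -> (j < n-1)%nat -> (r < n)%nat -> (c < n)%nat ->
  bodyOm n g0 (bracket (hor i) (hor j) s g0) r c = omb Rad i j r c.
Proof. intros. rewrite <- (comm_omh n) by (auto; lra).
  set (W := fun a b => sumR n (fun k => omh n Rad i a k * omh n Rad j k b) - sumR n (fun k => omh n Rad j a k * omh n Rad i k b)).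
  assert (Hv : forall r c, (r<n)%nat -> (c<n)%nat -> snd (bracket (hor i) (hor j) s g0) r c = mmul n g0 W r c).
  { intros r1 c1 Hr Hc. unfold bracket, tsub; cbn [snd]. rewrite !ddir_snd by auto.
    rewrite !assoc_sum. unfold mmul, W. rewrite <- sumR_minus. apply sumR_ext; intros; ring. }
  apply (bodyOm_eq n g0 _ W HSO Hv r c); auto.
Qed.

Lemma bracket_xdot i j s k : (i < n-1)%nat -> (j < n-1)%nat -> (k < n)%nat ->
  Xdot_full n (bracket (hor i) (hor j) s g0) k = 0.
Proof. intros. unfold Xdot_full. destruct (Nat.ltb_spec k (n-1)); auto.
  unfold bracket, tsub; cbn [fst]. rewrite !ddir_fst by auto. ring. Qed.

Lemma bracket_metric i j l s : (i < n-1)%nat -> (j < n-1)%nat -> (l < n-1)%nat ->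
  metric n Rad a m J s g0 (bracket (hor i) (hor j) s g0) (hor l s g0)
  = - (m * a / Rad^3) * (delta j l * s i - delta i l * s j).
Proof. intros. rewrite metric_eq by auto.
  rewrite (MF_ext _ _ _ _ _ _ _ _ _ _ (omb Rad i j) (fun _ => 0) (omh n Rad l) (unitv l)).
  - apply MF_bh; auto; lra.
  - intros; apply bracket_body; auto.
  - intros; apply hor_body; auto.
  - intros; apply bracket_xdot; auto.
  - intros; apply hor_xdot; auto.
Qed.
End Geo.

Lemma sumR_nonneg k f : (forall c, (c<k)%nat -> 0 <= f c) -> 0 <= sumR k f.
Proof. induction k; simpl; intros; [lra|]. assert (0 <= f k) by (apply H; lia).
  assert (0 <= sumR k f) by (apply IHk; intros; apply H; lia). lra. Qed.

Section B.
Variables (N : nat) (Rad m : R) (dd : nat -> R).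
Hypotheses (HR : 0 < Rad) (Hm : 0 < m) (Hdd : forall i, (i < N)%nat -> 0 < dd i).

Definition sig (s : vec) := sumR N (fun c => s c ^ 2 / dd c).
Definition Bm (s : vec) : mat := fun x y =>
  Rad^2 * (delta x y / dd x - m * (s x / dd x) * (s y / dd y) / (1 + m * sig s)).
Definition Kv (s : vec) : mat := fun x y => (delta x y * dd x + m * s x * s y) / Rad^2.

Lemma sig_nonneg s : 0 <= sig s.
Proof. apply sumR_nonneg. intros. specialize (Hdd c H). unfold Rdiv.
  apply Rmult_le_pos. nra. left; apply Rinv_0_lt_compat; auto. Qed.

Lemma one_sig s : 0 < 1 + m * sig s.
Proof. pose proof (sig_nonneg s). nra. Qed.

Lemma BK s x c : (x < N)%nat -> (c < N)%nat -> sumR N (fun b => Bm s x b * Kv s b c) = delta x c.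
Proof. intros Hx Hc. pose proof (one_sig s). pose proof (Hdd x Hx). pose proof (Hdd c Hc).
  rewrite (sumR_ext N _ (fun b => delta x b * (Rad^2 / dd x * Kv s b c)
     - (Rad^2 * m * (s x / dd x) / (1 + m * sig s)) * (s b / dd b * Kv s b c))).
  2:{ intros b Hb. unfold Bm. pose proof (Hdd b Hb). field. split; lra. }
  rewrite sumR_minus, sumR_delta, sumR_scal by auto.
  rewrite (sumR_ext N _ (fun b => delta b c * (s b / dd b * dd b / Rad^2) + (m * s c / Rad^2) * (s b ^2 / dd b))).
  2:{ intros b Hb. unfold Kv. pose proof (Hdd b Hb). field. split; lra. }
  rewrite sumR_plus, sumR_delta', sumR_scal by auto. fold (sig s).
  unfold Kv. field. split; lra.
Qed.

Lemma Bsym s x y : Bm s x y = Bm s y x.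
Proof. destruct (Nat.eq_dec x y). subst; auto.
  unfold Bm. rewrite !delta_neq by auto. unfold Rdiv; ring. Qed.

Lemma Kinv_B s (Ki : mat) : is_inverse N (Kv s) Ki ->
  forall x y, (x < N)%nat -> (y < N)%nat -> Ki x y = Bm s x y.
Proof. intros Hinv x y Hx Hy.
  assert (E: Ki x y = sumR N (fun c => delta x c * Ki c y)) by
    (symmetry; apply (sumR_delta N x (fun c => Ki c y)); auto).
  rewrite E.
  rewrite (sumR_ext N _ (fun c => sumR N (fun b => Bm s x b * Kv s b c * Ki c y))).
  2:{ intros c Hc. rewrite <- (BK s x c) by auto. rewrite (Rmult_comm _ (Ki c y)), <- sumR_scal.
      apply sumR_ext; intros; ring. }
  rewrite sumR_swap.
  rewrite (sumR_ext N _ (fun b => Bm s x b * delta b y)).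
  2:{ intros b Hb. rewrite <- Hinv by auto. rewrite <- sumR_scal. apply sumR_ext; intros; ring. }
  rewrite (sumR_ext N _ (fun b => delta b y * Bm s x b)) by (intros; ring).
  apply sumR_delta'; auto.
Qed.

Lemma dpl_pow2' f x l : derivable_pt_lim f x l -> derivable_pt_lim (fun t => f t ^ 2) x (2 * f x * l).
Proof. intros. apply (dpl_ext (fun t => f t * f t)). intros; ring.
  eapply dpl_eql. apply dpl_mult; eauto. ring. Qed.

Lemma B_deriv s i x y : exists l, derivable_pt_lim (fun t => Bm (upd s i t) x y) 0 l.
Proof. eexists. unfold Bm, sig, Rdiv.
  apply dpl_mult. apply dpl_const. apply dpl_minus. apply dpl_const.
  apply dpl_mult. apply dpl_mult. apply dpl_mult. apply dpl_const.
  apply dpl_mult. apply dpl_upd. apply dpl_const.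
  apply dpl_mult. apply dpl_upd. apply dpl_const.
  apply dpl_inv. apply dpl_plus. apply dpl_const. apply dpl_mult. apply dpl_const.
  apply (dpl_sum N (fun c t => upd s i t c ^ 2 * / dd c)). intros c Hc.
  apply dpl_mult. apply dpl_pow2'. apply dpl_upd. apply dpl_const.
  rewrite (sumR_ext N _ (fun c => s c ^ 2 / dd c)) by (intros; rewrite upd0; reflexivity).
  pose proof (one_sig s). unfold sig in H. lra.
Qed.
End B.

Section Dyn.
Variables (n : nat) (Rad m ca : R) (dd : nat -> R) (Kinv : vec -> mat) (C : nat -> nat -> nat -> vec -> R).
Hypotheses (Hn : (2 <= n)%nat) (HR : 0 < Rad) (Hm : 0 < m) (Hdd : forall i, (i < n-1)%nat -> 0 < dd i).
Hypothesis HK : forall s x y, (x < n-1)%nat -> (y < n-1)%nat -> Kinv s x y = Bm (n-1) Rad m dd s x y.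
Hypothesis HC : forall i j k s, (i < n-1)%nat -> (j < n-1)%nat -> (k < n-1)%nat ->
  C i j k s = - ca * (Bm (n-1) Rad m dd s k j * s i - Bm (n-1) Rad m dd s k i * s j).

Local Notation B := (Bm (n-1) Rad m dd).
Definition vel (s p : vec) (i : nat) := sumR (n-1) (fun b => B s i b * p b).
Definition dB i s x y := Dlim (fun t => B (upd s i t) x y).

Lemma dB_spec i s x y : derivable_pt_lim (fun t => B (upd s i t) x y) 0 (dB i s x y).
Proof. destruct (B_deriv (n-1) Rad m dd Hm Hdd s i x y) as [l Hl].
  unfold dB. rewrite (Dlim_eq _ l Hl). auto. Qed.

Lemma dB_sym i s x y : dB i s x y = dB i s y x.
Proof. unfold dB. f_equal. apply functional_extensionality; intro t. apply Bsym. Qed.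

Lemma Bsym' s x y : B s x y = B s y x.
Proof. apply Bsym. Qed.

Lemma Ys_eq i s p : (i < n-1)%nat -> Ys n Kinv i s p = vel s p i.
Proof. intros Hi. unfold Ys, pd_p. apply Dlim_eq. unfold Hred.
  eapply dpl_eql. apply dpl_scal.
  apply (dpl_Q (n-1) (fun _ => Kinv s) (fun t => upd p i t) (fun _ _ => 0) (fun a => delta a i)).
  intros; apply dpl_const. intros; apply dpl_upd.
  rewrite (sumR_ext (n-1) _ (fun a => delta a i * vel s p a + p a * B s a i)).
  2:{ intros x Hx. rewrite (sumR_ext (n-1) _ (fun b => delta x i * (B s x b * p b) + p x * (delta b i * B s x b))).
      2:{ intros; rewrite !upd0, HK by auto. ring. }
      rewrite sumR_plus, !sumR_scal, sumR_delta' by auto. unfold vel. ring. }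
  rewrite sumR_plus, sumR_delta' by auto.
  rewrite (sumR_ext (n-1) (fun a => p a * B s a i) (fun a => B s i a * p a)) by (intros; rewrite Bsym'; ring).
  fold (vel s p i). field.
Qed.

Lemma pdsH_eq i s p : (i < n-1)%nat ->
  pd_s (Hred n Kinv) s p i = 1/2 * sumR (n-1) (fun a => sumR (n-1) (fun b => dB i s a b * p a * p b)).
Proof. intros Hi. unfold pd_s. apply Dlim_eq. unfold Hred.
  eapply dpl_eql. apply dpl_scal.
  apply (dpl_Q (n-1) (fun t => Kinv (upd s i t)) (fun _ => p) (dB i s) (fun _ => 0)).
  intros a0 b Ha Hb. apply (dpl_ext (fun t => B (upd s i t) a0 b)). intros t. rewrite HK; auto. apply dB_spec.
  intros; apply dpl_const.
  f_equal. apply sumR_ext; intros. apply sumR_ext; intros. ring.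
Qed.

Lemma Yp_eq i s p : (i < n-1)%nat ->
  Yp n C Kinv i s p = - (1/2 * sumR (n-1) (fun a => sumR (n-1) (fun b => dB i s a b * p a * p b)))
    + ca * (s i * sumR (n-1) (fun j => vel s p j ^ 2) - vel s p i * sumR (n-1) (fun j => s j * vel s p j)).
Proof. intros Hi. unfold Yp. rewrite pdsH_eq by auto.
  rewrite (sumR_ext (n-1) (fun j => sumR (n-1) (fun k => C i j k s * p k * pd_p (Hred n Kinv) s p j)) (fun j => - ca * (s i * vel s p j ^ 2 - vel s p i * (s j * vel s p j)))).
  2:{ intros j Hj. rewrite (sumR_ext (n-1) (fun k => C i j k s * p k * pd_p (Hred n Kinv) s p j) (fun k => - ca * (vel s p j * s i) * (delta k k * B s j k * p k) + ca * s j * (B s i k * p k) * vel s p j)).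
      2:{ intros k Hk. rewrite HC by auto. change (pd_p (Hred n Kinv) s p j) with (Ys n Kinv j s p). rewrite Ys_eq by auto. rewrite (Bsym' s k j), (Bsym' s k i), delta_eq. ring. }
      rewrite sumR_plus.
      rewrite (sumR_ext (n-1) (fun k => - ca * (vel s p j * s i) * (delta k k * B s j k * p k)) (fun k => - ca * (vel s p j * s i) * (B s j k * p k))) by (intros; rewrite delta_eq; ring).
      rewrite (sumR_ext (n-1) (fun k => ca * s j * (B s i k * p k) * vel s p j) (fun k => ca * s j * vel s p j * (B s i k * p k))) by (intros; ring).
      rewrite !sumR_scal. unfold vel. ring. }
  rewrite sumR_scal, sumR_minus, !sumR_scal. ring.
Qed.
End Dyn.

Lemma upd0f x i : upd x i 0 = x.
Proof. apply functional_extensionality; intro; apply upd0. Qed.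

Lemma dsumsq n s i : (i < n-1)%nat -> derivable_pt_lim (fun t => sumsq n (upd s i t)) 0 (2 * s i).
Proof. intros. unfold sumsq. eapply dpl_eql.
  apply (dpl_sum (n-1) (fun c t => upd s i t c ^ 2) (fun c => 2 * s c * delta c i)).
  intros c Hc. eapply dpl_eql. apply dpl_pow2'. apply dpl_upd. cbv beta. rewrite upd0. ring.
  rewrite (sumR_ext (n-1) _ (fun c => delta c i * (2 * s c))) by (intros; ring).
  apply sumR_delta'; auto. Qed.

Section Dyn2.
Variables (n : nat) (Rad m ca : R) (dd : nat -> R) (Kinv : vec -> mat) (C : nat -> nat -> nat -> vec -> R).
Hypotheses (Hn : (2 <= n)%nat) (HR : 0 < Rad) (Hm : 0 < m) (Hdd : forall i, (i < n-1)%nat -> 0 < dd i).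
Hypothesis HK : forall s x y, (x < n-1)%nat -> (y < n-1)%nat -> Kinv s x y = Bm (n-1) Rad m dd s x y.
Hypothesis HC : forall i j k s, (i < n-1)%nat -> (j < n-1)%nat -> (k < n-1)%nat ->
  C i j k s = - ca * (Bm (n-1) Rad m dd s k j * s i - Bm (n-1) Rad m dd s k i * s j).
Local Notation B := (Bm (n-1) Rad m dd).
Local Notation vel := (vel n Rad m dd).
Local Notation dB := (dB n Rad m dd).
Local Notation N := (n-1)%nat.

Lemma dvel i j s p : (i < N)%nat -> derivable_pt_lim (fun t => vel s (upd p i t) j) 0 (B s j i).
Proof. intros. unfold vel. eapply dpl_eql.
  apply (dpl_sum N (fun b t => B s j b * upd p i t b) (fun b => delta b i * B s j b)).
  intros b Hb. eapply dpl_eql. apply dpl_mult. apply dpl_const. apply dpl_upd. simpl; ring.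
  apply sumR_delta'; auto. Qed.

Lemma dvel2 i s p : (i < N)%nat ->
  derivable_pt_lim (fun t => sumR N (fun j => vel s (upd p i t) j ^ 2)) 0 (sumR N (fun j => 2 * vel s p j * B s j i)).
Proof. intros. apply (dpl_sum N (fun j t => vel s (upd p i t) j ^ 2)). intros j Hj.
  eapply dpl_eql. apply dpl_pow2'. apply dvel; auto. cbv beta. rewrite upd0f. ring. Qed.

Lemma dsv i s p : (i < N)%nat ->
  derivable_pt_lim (fun t => sumR N (fun j => s j * vel s (upd p i t) j)) 0 (sumR N (fun j => s j * B s j i)).
Proof. intros. apply (dpl_sum N (fun j t => s j * vel s (upd p i t) j)). intros j Hj.
  apply dpl_scal. apply dvel; auto. Qed.

Lemma dQp i s p : (i < N)%nat ->
  derivable_pt_lim (fun t => sumR N (fun a => sumR N (fun b => dB i s a b * upd p i t a * upd p i t b))) 0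
    (sumR N (fun b => dB i s i b * p b) + sumR N (fun a => dB i s a i * p a)).
Proof. intros Hi. eapply dpl_eql.
  apply (dpl_Q N (fun _ => dB i s) (fun t => upd p i t) (fun _ _ => 0) (fun a => delta a i)).
  intros; apply dpl_const. intros; apply dpl_upd.
  rewrite upd0f.
  rewrite (sumR_ext N _ (fun a => delta a i * sumR N (fun b => dB i s a b * p b) + dB i s a i * p a)).
  2:{ intros x Hx. rewrite (sumR_ext N _ (fun b => delta x i * (dB i s x b * p b) + p x * (delta b i * dB i s x b))) by (intros; ring).
      rewrite sumR_plus, !sumR_scal, sumR_delta' by auto. ring. }
  rewrite sumR_plus, sumR_delta' by auto. auto.
Qed.

Lemma dvel_s i s p : (i < N)%nat ->
  derivable_pt_lim (fun t => vel (upd s i t) p i) 0 (sumR N (fun b => dB i s i b * p b)).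
Proof. intros. unfold vel. apply (dpl_sum N (fun b t => B (upd s i t) i b * p b)). intros b Hb.
  eapply dpl_eql. apply (dpl_mult (fun t => B (upd s i t) i b) (fun _ => p b)). apply dB_spec; auto. apply dpl_const. simpl; ring. Qed.


Lemma div_eq (rho : vec -> R) (drho : nat -> vec -> R) s p :
  (forall i, (i < N)%nat -> derivable_pt_lim (fun t => rho (upd s i t)) 0 (drho i s)) ->
  div_weighted n rho (Ys n Kinv) (Yp n C Kinv) s p =
  sumR N (fun i => drho i s * vel s p i + rho s * ca * (s i * sumR N (fun j => 2 * vel s p j * B s j i)
     - (B s i i * sumR N (fun j => s j * vel s p j) + vel s p i * sumR N (fun j => s j * B s j i)))).
Proof. intros Hrho. unfold div_weighted. apply sumR_ext; intros i Hi. unfold pd_s, pd_p.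
  rewrite (Dlim_eq _ (drho i s * vel s p i + rho s * sumR N (fun b => dB i s i b * p b))).
  2:{ apply (dpl_ext (fun t => rho (upd s i t) * vel (upd s i t) p i)).
      intros; rewrite (Ys_eq n Rad m dd Kinv HK); auto.
      eapply dpl_eql. apply dpl_mult. apply Hrho; auto. apply dvel_s; auto. cbv beta. rewrite upd0f. auto. }
  rewrite (Dlim_eq _ (rho s * (- (1/2 * (sumR N (fun b => dB i s i b * p b) + sumR N (fun a => dB i s a i * p a)))
      + ca * (s i * sumR N (fun j => 2 * vel s p j * B s j i)
     - (B s i i * sumR N (fun j => s j * vel s p j) + vel s p i * sumR N (fun j => s j * B s j i)))))).
  2:{ apply dpl_scal.
      apply (dpl_ext (fun t => - (1/2 * sumR N (fun a => sumR N (fun b => dB i s a b * upd p i t a * upd p i t b)))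
        + ca * (s i * sumR N (fun j => vel s (upd p i t) j ^ 2) - vel s (upd p i t) i * sumR N (fun j => s j * vel s (upd p i t) j)))).
      intros; rewrite (Yp_eq n Rad m ca dd Kinv C Hm Hdd HK HC); auto.
      apply dpl_plus. apply dpl_opp. apply dpl_scal. apply dQp; auto.
      apply dpl_scal. eapply dpl_eql. apply dpl_minus. apply dpl_scal. apply dvel2; auto.
      apply dpl_mult. apply dvel; auto. apply dsv; auto.
      cbv beta. rewrite upd0f. ring. }
  rewrite (sumR_ext N (fun a => dB i s a i * p a) (fun b => dB i s i b * p b)) by (intros; rewrite dB_sym; auto).
  field.
Qed.
End Dyn2.

Lemma sumR_const k c : sumR k (fun _ => c) = INR k * c.
Proof. induction k; simpl sumR; [simpl; ring|]. rewrite IHk, S_INR. ring. Qed.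

Section Const.
Variables (n : nat) (Rad m d : R).
Hypotheses (Hn : (2 <= n)%nat) (HR : 0 < Rad) (Hm : 0 < m) (Hd : 0 < d).
Local Notation N := (n-1)%nat.
Local Notation B := (Bm (n-1) Rad m (fun _ => d)).
Local Notation vel := (vel n Rad m (fun _ => d)).
Definition E (s : vec) := d + m * sumsq n s.
Definition sp (s p : vec) := sumR N (fun j => s j * p j).

Lemma sumsq_nonneg s : 0 <= sumsq n s.
Proof. apply sumR_nonneg; intros. nra. Qed.
Lemma E_pos s : 0 < E s.
Proof. unfold E. pose proof (sumsq_nonneg s). nra. Qed.

Lemma Bc s x y : B s x y = Rad^2 * (delta x y / d - m * s x * s y / (d * E s)).
Proof. unfold Bm, sig, E. pose proof (E_pos s). unfold E in H.
  rewrite (sumR_ext N _ (fun c => / d * s c ^ 2)) by (intros; field; lra).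
  rewrite sumR_scal. fold (sumsq n s).
  replace (1 + m * (/ d * sumsq n s)) with ((d + m * sumsq n s) / d) by (field; lra).
  field. repeat split; lra.
Qed.

Lemma Bw_r s w i : (i < N)%nat -> sumR N (fun b => B s i b * w b) = Rad^2 * (w i / d - m * s i * sp s w / (d * E s)).
Proof. intros. pose proof (E_pos s).
  rewrite (sumR_ext N _ (fun b => delta i b * (Rad^2 * w b / d) - (Rad^2 * m * s i / (d * E s)) * (s b * w b))).
  2:{ intros; rewrite Bc. field. split; lra. }
  rewrite sumR_minus, sumR_delta, sumR_scal by auto. unfold sp. field. split; lra. Qed.

Lemma Bw_l s w i : (i < N)%nat -> sumR N (fun j => w j * B s j i) = Rad^2 * (w i / d - m * s i * sp s w / (d * E s)).
Proof. intros. rewrite <- Bw_r by auto. apply sumR_ext; intros. rewrite Bsym. ring. Qed.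

Lemma vel_c s p i : (i < N)%nat -> vel s p i = Rad^2 * (p i / d - m * s i * sp s p / (d * E s)).
Proof. intros. unfold vel. apply Bw_r; auto. Qed.

Lemma sv_c s p : sumR N (fun j => s j * vel s p j) = Rad^2 * sp s p / E s.
Proof. pose proof (E_pos s).
  rewrite (sumR_ext N _ (fun j => (Rad^2 / d) * (s j * p j) - (Rad^2 * m * sp s p / (d * E s)) * s j ^2)).
  2:{ intros; rewrite vel_c by auto. field. split; lra. }
  rewrite sumR_minus, !sumR_scal. fold (sumsq n s). fold (sp s p).
  unfold E in *. field. split; lra. Qed.

Lemma pv_c s p : sumR N (fun j => p j * vel s p j) = Rad^2 * (sumR N (fun j => p j ^ 2) / d - m * sp s p ^ 2 / (d * E s)).
Proof. pose proof (E_pos s).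
  rewrite (sumR_ext N _ (fun j => (Rad^2 / d) * p j ^ 2 - (Rad^2 * m * sp s p / (d * E s)) * (s j * p j))).
  2:{ intros; rewrite vel_c by auto. field. split; lra. }
  rewrite sumR_minus, !sumR_scal. fold (sp s p). field. split; lra. Qed.

Lemma vv_c s p : sumR N (fun j => vel s p j ^ 2) =
  Rad^4 * (sumR N (fun j => p j ^ 2) / d^2 - 2 * m * sp s p ^ 2 / (d^2 * E s) + m^2 * sp s p ^ 2 * sumsq n s / (d^2 * E s ^ 2)).
Proof. pose proof (E_pos s).
  rewrite (sumR_ext N _ (fun j => (Rad^4 / d^2) * p j ^ 2 - (2 * Rad^4 * m * sp s p / (d^2 * E s)) * (s j * p j)
     + (Rad^4 * m^2 * sp s p ^ 2 / (d^2 * E s ^ 2)) * s j ^ 2)).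
  2:{ intros; rewrite vel_c by auto. field. split; lra. }
  rewrite sumR_plus, sumR_minus, !sumR_scal. fold (sp s p). fold (sumsq n s). field. split; lra. Qed.

Lemma sp_2v s p : sp s (fun j => 2 * vel s p j) = 2 * (Rad^2 * sp s p / E s).
Proof. unfold sp. rewrite (sumR_ext N _ (fun j => 2 * (s j * vel s p j))) by (intros; ring).
  rewrite sumR_scal, sv_c. auto. Qed.
Lemma sp_ss s : sp s s = sumsq n s.
Proof. unfold sp, sumsq. apply sumR_ext; intros; ring. Qed.
End Const.

Lemma Jpos n J i : symmetric_pd n J -> (i < n)%nat -> 0 < J i i.
Proof. intros [_ Hpd] Hi. specialize (Hpd (unitv i)).
  assert (E : sumR n (fun a => sumR n (fun b => unitv i a * J a b * unitv i b)) = J i i).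
  { unfold unitv. rewrite (sumR_ext n _ (fun a => delta i a * J a i)).
    apply (sumR_delta n i (fun a => J a i)); auto.
    intros a Ha. rewrite (sumR_ext n _ (fun b => delta i b * (delta i a * J a b))) by (intros; ring).
    rewrite sumR_delta by auto. ring. }
  rewrite <- E. apply Hpd. exists i. split; auto. unfold unitv. rewrite delta_eq. lra. Qed.

Section Main.
Variables (n : nat) (Rad a m : R) (J : mat) (hor : nat -> vfield) (g0 : mat) (Kinv : vec -> mat) (dd : nat -> R).
Hypotheses (Hn : (2 <= n)%nat) (HR : 0 < Rad) (Hm : 0 < m) (HJ : Jdiag n J) (Hhor : hor_spec n Rad hor) (HSO : in_SO n g0)
  (Hdd : forall i, (i < n-1)%nat -> 0 < dd i)
  (Hddeq : forall i, (i < n-1)%nat -> dd i = J i i + J (n-1)%nat (n-1)%nat + m * a^2)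
  (HKinv : forall s, is_inverse (n - 1) (Kmat n Rad a m J hor g0 s) (Kinv s)).

Lemma HK_main : forall s x y, (x < n-1)%nat -> (y < n-1)%nat -> Kinv s x y = Bm (n-1) Rad m dd s x y.
Proof. intros s. apply Kinv_B; auto. intros i j Hi Hj. rewrite <- (HKinv s i j Hi Hj).
  apply sumR_ext; intros l Hl. rewrite (Kmat_eq n Rad a m J hor g0) by auto.
  unfold Kv. rewrite Hddeq by auto. auto. Qed.

Lemma HC_main : forall i j k s, (i < n-1)%nat -> (j < n-1)%nat -> (k < n-1)%nat ->
  Ccoef n Rad a m J hor g0 Kinv i j k s = - (m * a / Rad^3) * (Bm (n-1) Rad m dd s k j * s i - Bm (n-1) Rad m dd s k i * s j).
Proof. intros i j k s Hi Hj Hk. unfold Ccoef.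
  rewrite (sumR_ext (n-1) _ (fun l => delta j l * (- (m * a / Rad^3) * s i * Bm (n-1) Rad m dd s k l)
      - delta i l * (- (m * a / Rad^3) * s j * Bm (n-1) Rad m dd s k l))).
  2:{ intros l Hl. rewrite (bracket_metric n Rad a m J hor g0) by auto. rewrite HK_main by auto. ring. }
  rewrite sumR_minus, !sumR_delta by auto. ring. Qed.
End Main.

Theorem mainTheorem7 (n : nat) (Rad a m : R) (J : mat)
  (hor : nat -> vfield) (g0 : mat) (Kinv : vec -> mat) :
  (3 <= n)%nat -> 0 < Rad -> 0 < m -> symmetric_pd n J ->
  hor_spec n Rad hor -> in_SO n g0 ->
  (forall s, is_inverse (n - 1) (Kmat n Rad a m J hor g0 s) (Kinv s)) ->
  let C := Ccoef n Rad a m J hor g0 Kinv in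
  let H := Hred n Kinv in
  let Y_s := Ys n Kinv in
  let Y_p := Yp n C Kinv in
  (* (C1) *)
  ((forall i j, (i < n)%nat -> (j < n)%nat -> i <> j -> J i j = 0) -> a = 0 ->
     (forall i s p, (i < n - 1)%nat -> Y_p i s p = - pd_s H s p i)
     /\ (forall s p, div_weighted n (fun _ => 1) Y_s Y_p s p = 0))
  /\
  (* (C2) *)
  (forall J1 Jn : R,
     (forall i j, (i < n)%nat -> (j < n)%nat ->
        J i j = if Nat.eq_dec i j then (if Nat.ltb i (n - 1) then J1 else Jn) else 0) ->
     let phi := fun s => m * a / (2 * Rad * (J1 + Jn + m * a ^ 2)) * sumsq n s in
     (forall s p,
        div_weighted n
          (fun s => exp ((INR n - 2) * m * a / (2 * Rad * (J1 + Jn + m * a ^ 2)) * sumsq n s))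
          Y_s Y_p s p = 0)
     /\
     (let Ht := fun s pt => H s (fun k => exp (- phi s) * pt k) in
      forall s pt i, (i < n - 1)%nat ->
        let p := fun k => exp (- phi s) * pt k in
        exp (- phi s) * Y_s i s p = pd_p Ht s pt i /\
        exp (- phi s) * lie_deriv n Y_s Y_p (fun s' p' => exp (phi s') * p' i) s p
          = - pd_s Ht s pt i)).
Proof.
  intros Hn3 HR Hm HJpd Hhor HSO HKinv. cbv zeta.
  assert (Hn : (2 <= n)%nat) by lia.
  assert (HJN : 0 < J (n-1)%nat (n-1)%nat) by (apply (Jpos n); auto; lia).
  split.
  - intros Hdiag Ha0.
    set (dd := fun i => J i i + J (n-1)%nat (n-1)%nat + m * a^2).
    assert (Hdd : forall i, (i < n-1)%nat -> 0 < dd i).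
    { intros. unfold dd. assert (0 < J i i) by (apply (Jpos n); auto; lia). nra. }
    assert (HK := HK_main n Rad a m J hor g0 Kinv dd Hn HR Hm Hdiag Hhor HSO Hdd (fun i _ => eq_refl) HKinv).
    assert (HC := HC_main n Rad a m J hor g0 Kinv dd Hn HR Hm Hdiag Hhor HSO Hdd (fun i _ => eq_refl) HKinv).
    split.
    + intros i s p Hi. rewrite (Yp_eq n Rad m (m * a / Rad^3) dd Kinv _ Hm Hdd HK HC i s p Hi).
      rewrite (pdsH_eq n Rad m dd Kinv Hm Hdd HK i s p Hi). subst a. unfold Rdiv. ring.
    + intros s p. rewrite (div_eq n Rad m (m * a / Rad^3) dd Kinv _ Hm Hdd HK HC (fun _ => 1) (fun _ _ => 0)).
      apply sumR_zero; intros. subst a. unfold Rdiv. ring.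
      intros; apply dpl_const.
  - intros J1 Jn HJ.
    assert (HJd : Jdiag n J).
    { intros i j Hi Hj Hne. rewrite HJ by auto. destruct Nat.eq_dec; congruence. }
    assert (HJ1 : J 0%nat 0%nat = J1).
    { rewrite HJ by lia. destruct Nat.eq_dec; [|congruence]. destruct (Nat.ltb_spec 0 (n-1)); auto; lia. }
    assert (HJn : J (n-1)%nat (n-1)%nat = Jn).
    { rewrite HJ by lia. destruct Nat.eq_dec; [|congruence]. destruct (Nat.ltb_spec (n-1) (n-1)); auto; lia. }
    assert (HJ1p : 0 < J1) by (rewrite <- HJ1; apply (Jpos n); auto; lia).
    assert (HJnp : 0 < Jn) by (rewrite <- HJn; auto).
    set (d := J1 + Jn + m * a^2).
    assert (Hd : 0 < d) by (unfold d; nra).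
    set (dd := fun _ : nat => d).
    assert (Hdd : forall i, (i < n-1)%nat -> 0 < dd i) by (intros; unfold dd; auto).
    assert (Hddeq : forall i, (i < n-1)%nat -> dd i = J i i + J (n-1)%nat (n-1)%nat + m * a^2).
    { intros i Hi. rewrite HJn. rewrite HJ by lia. destruct Nat.eq_dec; [|congruence].
      destruct (Nat.ltb_spec i (n-1)); [|lia]. auto. }
    assert (HK := HK_main n Rad a m J hor g0 Kinv dd Hn HR Hm HJd Hhor HSO Hdd Hddeq HKinv).
    assert (HC := HC_main n Rad a m J hor g0 Kinv dd Hn HR Hm HJd Hhor HSO Hdd Hddeq HKinv).
    set (ca := m * a / Rad^3) in HC.
    set (kk := (INR n - 2) * m * a / (2 * Rad * d)).
    set (cp := m * a / (2 * Rad * d)).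
    split.
    + intros s p.
      rewrite (div_eq n Rad m ca dd Kinv _ Hm Hdd HK HC (fun s => exp (kk * sumsq n s))
        (fun i s => exp (kk * sumsq n s) * (kk * (2 * s i)))).
      2:{ intros i Hi. eapply dpl_eql. apply dpl_exp. apply dpl_scal. apply dsumsq; auto.
          cbv beta. rewrite upd0f. ring. }
      unfold dd in *.
      set (A := sp n s p). set (S2 := sumsq n s). set (Es := E n m d s).
      set (T1 := Rad^2 * A / Es). set (X := 1/d - m * S2 / (d * Es)).
      set (rho := exp (kk * S2)).
      set (a1 := 2*kk*Rad^2/d + ca*(2*Rad^4/d^2 - Rad^4 * X/d)).
      set (a2 := -2*kk*Rad^2 * m * A/(d*Es) + ca*(-2*Rad^4 * m*A/(d^2*Es) - 2*Rad^2 * m*T1/(d*Es) + Rad^2 * m*T1/(d*Es) + Rad^4 * X*m*A/(d*Es))).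
      set (a3 := - ca * Rad^2 * T1 / d).
      assert (HEs : 0 < Es) by (apply E_pos; auto).
      rewrite (sumR_ext (n-1) _ (fun i => rho * a1 * (s i * p i) + rho * a2 * s i ^ 2 + rho * a3)).
      2:{ intros i Hi. rewrite sv_c by auto. rewrite !Bw_l by auto. rewrite sp_2v, sp_ss by auto.
          rewrite Bc by auto. rewrite !vel_c by auto. fold A S2 Es.
          unfold a1, a2, a3, T1, X. rewrite delta_eq. field. lra. }
      rewrite !sumR_plus, !sumR_scal, sumR_const. fold (sp n s p). fold A. fold (sumsq n s). fold S2.
      unfold a1, a2, a3, T1, X, kk, Es, E, ca. fold S2.
      rewrite (minus_INR n 1) by lia. simpl INR.
      assert (0 <= S2) by (apply sumsq_nonneg).
      field. repeat split; nra.
    + intros s pt i Hi. unfold dd in *.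
      set (al := exp (- (cp * sumsq n s))).
      set (e := exp (cp * sumsq n s)).
      assert (Hal : al = / e) by (unfold al, e; apply exp_Ropp).
      assert (He : 0 < e) by (apply exp_pos).
      split.
      * rewrite (Ys_eq n Rad m _ Kinv HK) by auto. unfold pd_p. symmetry. apply Dlim_eq. unfold Hred.
        eapply dpl_eql. apply dpl_scal.
        apply (dpl_Q (n-1) (fun _ => Kinv s) (fun t k => al * upd pt i t k) (fun _ _ => 0) (fun k => al * delta k i)).
        intros; apply dpl_const. intros; apply dpl_scal; apply dpl_upd.
        rewrite (sumR_ext (n-1) _ (fun a0 => delta a0 i * (al * vel n Rad m (fun _ => d) s (fun k => al * pt k) a0)
            + (al * pt a0) * (al * Bm (n-1) Rad m (fun _ => d) s i a0))).
        2:{ intros x Hx.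
            rewrite (sumR_ext (n-1) _ (fun b => delta x i * (al * (Bm (n-1) Rad m (fun _ => d) s x b * (al * pt b)))
                + (al*pt x) * al * (delta b i * Bm (n-1) Rad m (fun _ => d) s x b)))
              by (intros; rewrite !upd0, HK by auto; ring).
            rewrite sumR_plus, !sumR_scal, sumR_delta' by auto. rewrite Bsym. unfold vel. ring. }
        rewrite sumR_plus, sumR_delta' by auto.
        rewrite (sumR_ext (n-1) (fun a0 => al * pt a0 * (al * Bm (n-1) Rad m (fun _ => d) s i a0))
            (fun a0 => al * (Bm (n-1) Rad m (fun _ => d) s i a0 * (al * pt a0)))) by (intros; ring).
        rewrite sumR_scal. unfold vel. field.
      * set (p := fun k => al * pt k).
        set (B := Bm (n-1) Rad m (fun _ => d)).
        set (v := vel n Rad m (fun _ => d) s p).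
        unfold lie_deriv.
        rewrite (sumR_ext (n-1) _ (fun j => (e * (cp * 2) * p i) * (s j * v j) + delta j i * (e * Yp n (Ccoef n Rad a m J hor g0 Kinv) Kinv j s p))).
        2:{ intros j Hj. unfold pd_s, pd_p. cbv beta.
            rewrite (Dlim_eq (fun t => exp (cp * sumsq n (upd s j t)) * p i) (e * (cp * (2 * s j)) * p i)).
            2:{ eapply dpl_eql. apply (dpl_mult (fun t => exp (cp * sumsq n (upd s j t))) (fun _ => p i)).
                apply dpl_exp. apply dpl_scal. apply dsumsq; auto. apply dpl_const. cbv beta. rewrite upd0f. fold e. ring. }
            rewrite (Dlim_eq (fun t => exp (cp * sumsq n s) * upd p j t i) (e * delta i j)).
            2:{ apply dpl_scal. apply dpl_upd. }
            rewrite (Ys_eq n Rad m _ Kinv HK) by auto. fold v. rewrite delta_sym. ring. }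
        rewrite sumR_plus, sumR_scal, sumR_delta' by auto.
        rewrite (Yp_eq n Rad m ca _ Kinv _ Hm Hdd HK HC) by auto. fold v.
        unfold pd_s.
        rewrite (Dlim_eq _ (1/2 * sumR (n-1) (fun a0 => sumR (n-1) (fun b => dB n Rad m (fun _ => d) i s a0 b * p a0 * p b))
             + 1/2 * (-(2 * (cp * (2 * s i)))) * sumR (n-1) (fun a0 => p a0 * v a0))).
        2:{ unfold Hred. eapply dpl_eql. apply dpl_scal.
            apply (dpl_Q (n-1) (fun t => Kinv (upd s i t)) (fun t k => exp (- (cp * sumsq n (upd s i t))) * pt k)
               (dB n Rad m (fun _ => d) i s) (fun k => al * (-(cp * (2 * s i))) * pt k)).
            - intros a0 b Ha Hb. apply (dpl_ext (fun t => B (upd s i t) a0 b)).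
              intros t. rewrite HK; auto. apply dB_spec; auto.
            - intros k Hk. eapply dpl_eql.
              apply (dpl_mult (fun t => exp (- (cp * sumsq n (upd s i t)))) (fun _ => pt k)).
              apply dpl_exp. apply dpl_opp. apply dpl_scal. apply dsumsq; auto. apply dpl_const.
              cbv beta. rewrite upd0f. fold al. ring.
            - rewrite upd0f. fold al.
              rewrite (sumR_ext (n-1) _ (fun a0 => sumR (n-1) (fun b => dB n Rad m (fun _ => d) i s a0 b * p a0 * p b)
                  + (-(2 * (cp * (2 * s i)))) * (p a0 * v a0))).
              2:{ intros x Hx. unfold v, vel.
                  rewrite (sumR_ext (n-1) _ (fun b => dB n Rad m (fun _ => d) i s x b * p x * p b
                     + (-(2 * (cp * (2 * s i))) * p x) * (B s x b * p b))).
                  2:{ intros; rewrite HK by auto. unfold p, B. ring. }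
                  rewrite sumR_plus, sumR_scal. unfold B. ring. }
              rewrite sumR_plus, sumR_scal. ring. }
        unfold v. rewrite sv_c, vv_c, pv_c, vel_c by auto.
        set (QQ := sumR (n - 1) (fun a0 => sumR (n - 1) (fun b => dB n Rad m (fun _ : nat => d) i s a0 b * p a0 * p b))).
        assert (HEs : 0 < E n m d s) by (apply E_pos; auto).
        assert (0 <= sumsq n s) by (apply sumsq_nonneg).
        rewrite Hal. unfold cp, ca, E in *. field. repeat split; lra.
Qed.
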